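(* Let $\mathbf v=(v_1,\dots,v_m)$ and $\mathbf k=(k_1,\dots,k_m)$ be $m$-tuples of positive integers with $k_i\le v_i$ for all $i$, and put $v=\sum_i v_i$, $k=\sum_i k_i$, assuming $k\ge 2$. Then \[ C(\mathbf v,\mathbf k,2)\ \ge\ \left\lceil \frac{\binom{v}{2}-\sum_{i:\,k_i=1}\binom{v_i}{2}}{\binom{k}{2}}\right\rceil=\left\lceil \frac{\sum_{i:\,k_i\neq 1}\binom{v_i}{2}+\sum_{1\le i<j\le m}v_iv_j}{\binom{k}{2}}\right\rceil, \] with the convention $\binom{1}{2}=0$.
   Context: Let $X_1,\dots,X_m$ be pairwise disjoint sets with $|X_i|=v_i$. A block is an $m$-tuple of sets $(B_1,\dots,B_m)$ with $B_i\subseteq X_i$, $|B_i|=k_i$. An $m$-tuple of sets $(T_1,\dots,T_m)$ is $(\mathbf v,\mathbf k,2)$-admissible if $T_i\subseteq X_i$, $|T_i|\le k_i$ for all $i$ and $\sum_i|T_i|=2$; it is contained in a block if $T_i\subseteq B_i$ for all $i$. A ${\rm GC}(\mathbf v,\mathbf k,2)$ is a finite family (repetitions allowed) of blocks such that every admissible tuple is contained in at least one block; $C(\mathbf v,\mathbf k,2)$ is the minimum number of blocks of such a family. *)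

(* Defs.v *)
From mathcomp Require Import all_boot.
Set Implicit Arguments. Unset Strict Implicit. Unset Printing Implicit Defensive.

Definition pt (m : nat) (v : 'I_m -> nat) : finType := {i : 'I_m & 'I_(v i)}.

Definition part (m : nat) (v : 'I_m -> nat) (i : 'I_m) : {set pt v} :=
  [set x : pt v | tag x == i].

(* A block (B_1,...,B_m) with |B_i| = k_i, represented by the union of the B_i. *)
Definition is_block (m : nat) (v k : 'I_m -> nat) (B : {set pt v}) : Prop :=
  forall i : 'I_m, #|B :&: part v i| = k i.

(* (v,k,2)-admissible tuple (T_1,...,T_m), represented by the union of the T_i. *)
Definition admissible (m : nat) (v k : 'I_m -> nat) (T : {set pt v}) : Prop :=
  #|T| = 2 /\ forall i : 'I_m, #|T :&: part v i| <= k i.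

Definition is_GC (m : nat) (v k : 'I_m -> nat) (F : seq {set pt v}) : Prop :=
  (forall B, B \in F -> is_block k B) /\
  (forall T, admissible k T -> exists2 B, B \in F & T \subset B).

Definition ceil_div (a b : nat) : nat := (a + b - 1) %/ b.

(* Main.v *)
Require Import Defs.
From mathcomp Require Import all_boot.
From mathcomp Require Import zify.

Lemma card_split m (v : 'I_m -> nat) (B : {set pt v}) :
  #|B| = \sum_(i < m) #|B :&: part v i|.
Proof.
rewrite -sum1_card (partition_big (fun x : pt v => tag x) xpredT) //=.
apply: eq_bigr => i _; rewrite -sum1_card; apply: eq_bigl => x.
by rewrite !inE andbC.
Qed.

Lemma card_part m (v : 'I_m -> nat) i : #|part v i| = v i.
Proof.
have -> : part v i = [set (Tagged (fun j => 'I_(v j)) t : pt v) | t : 'I_(v i)].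
  apply/setP => x; rewrite inE; apply/eqP/imsetP => [|[t _ ->]] //.
  by case: x => j t /= Hj; subst j; exists t.
rewrite card_imset ?card_ord // => s t; exact: eq_from_Tagged.
Qed.

Lemma card_ptv m (v : 'I_m -> nat) : #|pt v| = \sum_(i < m) v i.
Proof.
rewrite -cardsT card_split; apply: eq_bigr => i _.
by rewrite setTI card_part.
Qed.

Lemma part_disj m (v : 'I_m -> nat) (T : {set pt v}) i j :
  0 < #|T| -> T \subset part v i -> T \subset part v j -> i = j.
Proof.
case/card_gt0P => x xT /subsetP/(_ x xT) + /subsetP/(_ x xT).
by rewrite !inE => /eqP <- /eqP.
Qed.

Lemma pointwise m (v k : 'I_m -> nat) (hk : forall i, 0 < k i) (T : {set pt v}) :
  #|T| = 2 ->
  ([forall i, #|T :&: part v i| <= k i] : nat)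
   + \sum_(i < m | k i == 1) (T \subset part v i : nat) = 1.
Proof.
move=> T2.
have sub2 i : (T \subset part v i) = (#|T :&: part v i| == 2).
  apply/idP/idP => [/setIidPl -> | /eqP H]; first by rewrite T2.
  have : T :&: part v i == T by rewrite eqEcard subsetIl H T2 leqnn.
  by move/eqP <-; rewrite subsetIr.
case: forallP => [H | H].
  rewrite big1 // => i /eqP ki.
  suff -> : (T \subset part v i) = false by [].
  apply/negbTE; rewrite sub2; have := H i; rewrite ki; lia.
have [i Hi] : exists i, ~~ (#|T :&: part v i| <= k i).
  apply/existsP; rewrite -negb_forall; apply/negP => /forallP; exact: H.
have le2 : #|T :&: part v i| <= 2 by rewrite -T2 subset_leq_card // subsetIl.
have ki : k i == 1 by have := hk i; lia.
have Ti : T \subset part v i by rewrite sub2; have := hk i; lia.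
rewrite (bigD1 i) //= Ti big1 // => j /andP [_ ji].
suff -> : (T \subset part v j) = false by [].
apply/negbTE/negP => Tj.
by move: ji; rewrite (@part_disj _ v T i j _ Ti Tj) ?T2 // eqxx.
Qed.
Lemma binD2 a b : 'C(a + b, 2) = 'C(a, 2) + 'C(b, 2) + a * b.
Proof.
elim: b => [|b IH]; first by rewrite addn0 muln0 bin0n ?addn0.
rewrite addnS binS IH bin1 binS bin1 mulnS. lia.
Qed.

Lemma bin2_sum_cross n (v : 'I_n -> nat) :
  'C(\sum_(i < n) v i, 2) = \sum_(i < n) 'C(v i, 2)
     + \sum_(i < n) \sum_(j < n | i < j) v i * v j.
Proof.
elim: n v => [|n IH] v; first by rewrite !big_ord0.
rewrite !big_ord_recr /= binD2 IH.
have -> : \sum_(j < n.+1 | n < j) v ord_max * v j = 0.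
  by rewrite big_pred0 // => j; rewrite ltnNge -ltnS ltn_ord.
have -> : \sum_(i < n) \sum_(j < n.+1 | i < j) v (widen_ord (leqnSn n) i) * v j
   = \sum_(i < n) \sum_(j < n | i < j)
           v (widen_ord (leqnSn n) i) * v (widen_ord (leqnSn n) j)
     + (\sum_(i < n) v (widen_ord (leqnSn n) i)) * v ord_max.
  rewrite big_distrl -big_split /=; apply: eq_bigr => i _.
  by rewrite big_mkcond big_ord_recr /= ltn_ord -big_mkcond.
rewrite addn0; set A := \sum_(i < n) binomial _ _; set B := \sum_(i < n) \sum_(j < n | _) _; set D := \sum_(i < n) v _. lia.
Qed.

Lemma sum_ind (T : finType) (A : {pred T}) (P : pred T) :
  \sum_(x in A) (P x : nat) = #|[set x in A | P x]|.
Proof.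
rewrite -sum1_card [RHS]big_mkcond [LHS]big_mkcond /=. apply: eq_bigr => x _.
by rewrite inE; case: (x \in A); case: (P x).
Qed.

Lemma ceil_le a c n : 0 < c -> a <= n * c -> ceil_div a c <= n.
Proof.
move=> c0 H; rewrite /ceil_div -ltnS ltn_divLR // mulSn; lia.
Qed.

Theorem proposition3p7 (m : nat) (v k : 'I_m -> nat)
  (hv : forall i, 0 < v i) (hk : forall i, 0 < k i) (hkv : forall i, k i <= v i)
  (hk2 : 2 <= \sum_(i < m) k i) :
  let V := \sum_(i < m) v i in
  let K := \sum_(i < m) k i in
  ceil_div ('C(V, 2) - \sum_(i < m | k i == 1) 'C(v i, 2)) 'C(K, 2)
  = ceil_div (\sum_(i < m | k i != 1) 'C(v i, 2)
              + \sum_(i < m) \sum_(j < m | i < j) v i * v j) 'C(K, 2)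
  /\
  (forall F : seq {set pt v}, is_GC k F ->
     ceil_div ('C(V, 2) - \sum_(i < m | k i == 1) 'C(v i, 2)) 'C(K, 2) <= size F).
Proof.
move=> V K; split.
  congr ceil_div; rewrite /V bin2_sum_cross (bigID (fun i => k i == 1)) /=.
  lia.
move=> F [Fbl Fcov].
pose pairs := [set T : {set pt v} | #|T| == 2].
pose Adm := [set T in pairs | [forall i, #|T :&: part v i| <= k i]].
have c1 : #|Adm| + \sum_(i < m | k i == 1) 'C(v i, 2) = 'C(V, 2).
  have -> : 'C(V, 2) = #|pairs| by rewrite card_draws card_ptv.
  have -> : #|Adm| = \sum_(T in pairs) ([forall i, #|T :&: part v i| <= k i] : nat).
    rewrite -big_mkcondr /= -sum1_card; apply: eq_bigl => T; by rewrite !inE.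
  have -> : \sum_(i < m | k i == 1) 'C(v i, 2)
      = \sum_(i < m | k i == 1) \sum_(T in pairs) (T \subset part v i : nat).
    apply: eq_bigr => i _; rewrite -(@card_part _ v i) -cards_draws.
    rewrite -big_mkcondr /= -sum1_card; apply: eq_bigl => T; by rewrite !inE andbC.
  rewrite exchange_big /= -big_split /= -sum1_card; apply: eq_bigr => T.
  by rewrite inE => /eqP T2; rewrite pointwise.
have c2 : #|Adm| <= size F * 'C(K, 2).
  rewrite -sum1_card.
  apply: (@leq_trans (\sum_(T in Adm) \sum_(B <- F) (T \subset B : nat))).
    apply: leq_sum => T; rewrite !inE => /andP [/eqP T2 /forallP TA].
    have [B BF TB] := Fcov T (conj T2 TA).
    by rewrite (big_rem B) //= TB.
  rewrite exchange_big /= big_seq.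
  apply: (@leq_trans (\sum_(B <- F | B \in F) 'C(K, 2))); last first.
    by rewrite -big_seq big_const_seq count_predT iter_addn_0 mulnC.
  apply: leq_sum => B BF.
  rewrite sum_ind.
  apply: (@leq_trans #|[set T : {set pt v} | T \subset B & #|T| == 2]|).
    apply: subset_leq_card; apply/subsetP => T.
    by rewrite !inE => /andP [/andP [-> _] ->].
  rewrite cards_draws card_split.
  suff -> : \sum_(i < m) #|B :&: part v i| = K by [].
  by apply: eq_bigr => i _; apply: Fbl.
apply: ceil_le; first by rewrite bin_gt0.
rewrite -c1 addnK.
exact: c2.
Qed.
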